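(* Every divergent $T$-orbit of a positive integer and every nontrivial $T$-cycle of positive integers contains an integer congruent to $20\pmod{27}$; i.e. $\{20\bmod 27\}$ is forward sufficient and cycle sufficient.
   Context: $T(x)=x/2$ for $x$ even and $T(x)=(3x+1)/2$ for $x$ odd. A divergent orbit is an unbounded $T$-orbit of a positive integer; a nontrivial cycle is a periodic $T$-orbit of positive integers other than $\{1,2\}$. *)

(* Defs.v *)
From mathcomp Require Import all_boot.
Set Implicit Arguments. Unset Strict Implicit. Unset Printing Implicit Defensive.

Definition T (x : nat) : nat := if odd x then (3 * x + 1)./2 else x./2.

Definition divergent (n : nat) : Prop :=
  0 < n /\ forall B : nat, exists k : nat, B < iter k T n.

Definition on_nontrivial_cycle (n : nat) : Prop :=
  0 < n /\ (exists p : nat, 0 < p /\ iter p T n = n)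
        /\ (exists k : nat, iter k T n \notin [:: 1; 2]).

(* Main.v *)
Require Import Defs.
From mathcomp Require Import all_boot.
From mathcomp Require Import zify.

Definition wt (a : nat) : nat :=
  nth 49 [:: 49; 49; 28; 49; 16; 28; 49; 49; 16; 49; 49; 28; 49; 49; 28; 49;
             49; 16; 49; 49; 49; 49; 16; 28; 49; 49; 49] a.

Definition Ostep (a : nat) : nat := (14 * (3 * a + 1)) %% 27.
Definition Estep (a : nat) : nat := (14 * a) %% 27.

Definition bad (a : nat) : bool := (a == 13) || (a == 20) || (a == 26).

Lemma table_ok :
  all (fun a => (~~ bad a ==> ~~ bad (Ostep a) ==> (12 * wt (Ostep a) <= 7 * wt a))
             && (~~ bad a ==> ~~ bad (Estep a) ==> (4 * wt (Estep a) <= 7 * wt a)))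
      (iota 0 27).
Proof. by vm_compute. Qed.

Lemma wt_bounds a : 16 <= wt a <= 49.
Proof.
have [lt|ge] := ltnP a 27.
  by move: a lt; do 27 (case=> //); done.
by rewrite /wt nth_default.
Qed.

Lemma T_mod x : T x %% 27 = if odd x then Ostep (x %% 27) else Estep (x %% 27).
Proof.
rewrite /T /Ostep /Estep; have := odd_double_half x.
case: (odd x) => /= Hx; lia.
Qed.

Lemma T_odd x : odd x -> 2 * T x = 3 * x + 1.
Proof. move=> Ho; rewrite /T Ho; have := odd_double_half x; rewrite Ho /= => H; lia. Qed.

Lemma T_even x : ~~ odd x -> 2 * T x = x.
Proof. move=> /negbTE Ho; rewrite /T Ho; have := odd_double_half x; rewrite Ho /= => H; lia. Qed.

Definition V (x : nat) : nat := wt (x %% 27) * x.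

Lemma step x : ~~ bad (x %% 27) -> ~~ bad (T x %% 27) -> 8 * V (T x) <= 7 * V x + 392.
Proof.
move=> Hb Hb'.
have Ha : x %% 27 \in iota 0 27 by rewrite mem_iota /= add0n ltn_mod.
have := allP table_ok _ Ha; rewrite Hb /= => /andP [HO HE].
have W1 := wt_bounds (x %% 27); have W2 := wt_bounds (T x %% 27).
rewrite /V; move: Hb' W2; rewrite T_mod.
case Ho: (odd x) => Hb' W2.
- move: HO; rewrite Hb' /= => HO.
  have H2 := T_odd x Ho. rewrite ?Ho /=. nia.
- move: HE; rewrite Hb' /= => HE.
  have H2 := T_even x (negbT Ho). rewrite ?Ho /=. nia.
Qed.

Lemma odd_forever y : ~ (forall i, odd (iter i T y)).
Proof.
move=> H.
have key : forall i, 2 ^ i * (iter i T y + 1) = 3 ^ i * (y + 1).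
  elim=> [|i IH]; first by rewrite !expn0 !mul1n.
  rewrite iterS !expnS.
  have E := T_odd _ (H i).
  have -> : 2 * 2 ^ i * (T (iter i T y) + 1) = 2 ^ i * (2 * T (iter i T y) + 2) by nia.
  rewrite E.
  have -> : 3 * iter i T y + 1 + 2 = 3 * (iter i T y + 1) by nia.
  by rewrite mulnCA IH mulnA.
have Hd : 2 ^ (y + 1) %| y + 1.
  have Hc : coprime (2 ^ (y + 1)) (3 ^ (y + 1)) by rewrite coprimeXl // coprimeXr.
  by rewrite -(Gauss_dvdr _ Hc) -key dvdn_mulr.
have Hle : 2 ^ (y + 1) <= y + 1 by apply: dvdn_leq => //; rewrite addn1.
by rewrite leqNgt ltn_expl in Hle.
Qed.

Section Orbit.
Variable n : nat.
Hypothesis avoid : forall k, iter k T n %% 27 != 20.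

Lemma no13 k : iter k T n %% 27 != 13.
Proof.
apply/eqP => H; have := avoid k.+1; rewrite iterS T_mod H.
by case: odd.
Qed.

Lemma no26 k : iter k T n %% 27 != 26.
Proof.
apply/eqP => H.
have all26 : forall i, iter (i + k) T n %% 27 = 26 /\ odd (iter (i + k) T n).
  elim=> [|i [IH1 IH2]].
    split => //; case Ho: (odd (iter k T n)) => //.
    have := no13 k.+1; rewrite iterS T_mod Ho H. by [].
  have E1 : iter (i.+1 + k) T n %% 27 = 26 by rewrite addSn iterS T_mod IH2 IH1.
  split => //; case Ho: (odd (iter (i.+1 + k) T n)) => //.
  have := no13 (i.+1 + k).+1; rewrite iterS T_mod Ho E1. by [].
apply: (odd_forever (iter k T n)) => i.
by rewrite -iterD; case: (all26 i).
Qed.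

Lemma notbad k : ~~ bad (iter k T n %% 27).
Proof.
by rewrite /bad (negbTE (no13 k)) (negbTE (avoid k)) (negbTE (no26 k)).
Qed.

Lemma Vstep k : 8 * V (iter k.+1 T n) <= 7 * V (iter k T n) + 392.
Proof. rewrite iterS; apply: step; first exact: notbad. by rewrite -iterS; apply: notbad. Qed.

Lemma Vbound j k : V (iter (k + j) T n) <= maxn (V (iter j T n)) 392.
Proof.
elim: k => [|k IH]; first by rewrite add0n leq_maxl.
have := Vstep (k + j); rewrite addSn.
move: IH; set M := maxn _ _; have : 392 <= M by rewrite leq_maxr.
lia.
Qed.

End Orbit.

Lemma iter1 m : iter m T 1 \in [:: 1; 2].
Proof.
elim: m => [|m]; first by [].
by rewrite iterS !inE => /orP [] /eqP ->.
Qed.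

Lemma small_ok : all (fun n => has (fun s => iter s T n == 1) (iota 0 120)) (iota 1 24).
Proof. by vm_compute. Qed.

Lemma iter_period x p j : iter p T x = x -> iter (p * j) T x = x.
Proof.
move=> H; elim: j => [|j IH]; first by rewrite muln0.
by rewrite mulnS iterD IH H.
Qed.

From Stdlib Require Import Classical.

Theorem mainTheorem15 :
  (forall n : nat, divergent n -> exists k : nat, iter k T n %% 27 = 20) /\
  (forall n : nat, on_nontrivial_cycle n -> exists k : nat, iter k T n %% 27 = 20).
Proof.
split.
- move=> n [Hn Hdiv].
  case: (classic (exists k, iter k T n %% 27 = 20)) => // Hno.
  have avoid : forall k, iter k T n %% 27 != 20.
    by move=> k; apply/eqP => H; apply: Hno; exists k.
  have [k Hk] := Hdiv (maxn (V n) 392).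
  have H1 := Vbound n avoid 0 k; rewrite addn0 /= in H1.
  have W := wt_bounds (iter k T n %% 27).
  move: Hk H1 W; rewrite /V; set M := maxn _ _; nia.
- move=> n [Hn [[p [Hp Hper]] [k0 Hk0]]].
  case: (classic (exists k, iter k T n %% 27 = 20)) => // Hno.
  have avoid : forall k, iter k T n %% 27 != 20.
    by move=> k; apply/eqP => H; apply: Hno; exists k.
  have Hsmall : V n <= 392.
    rewrite leqNgt; apply/negP => Hbig.
    have H1 := Vstep n avoid 0.
    have H2 := Vbound n avoid 1 p.-1.
    rewrite addn1 prednK // Hper /= in H2.
    move: H1 H2 Hbig; rewrite /=; set a := V (T n); set b := V n.
    lia.
  have Hn24 : n \in iota 1 24.
    rewrite mem_iota; have := wt_bounds (n %% 27); move: Hsmall; rewrite /V.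
    move=> ? ?; apply/andP; split; [lia | nia].
  have /hasP [s _ /eqP Hs] := allP small_ok _ Hn24.
  have Hn12 : n = iter (p * s - s) T 1.
    rewrite -Hs -iterD subnK; first by rewrite iter_period.
    by rewrite leq_pmull.
  exfalso; move: Hk0; rewrite Hn12 -iterD.
  by rewrite iter1.
Qed.
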